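(* Let $A=2^\omega$ be the set of all subsets of $\omega$. For each $n\in\omega$ let $e_n\subseteq A$ be the set of subsets of $\omega$ containing $n$, and let $W$ be the closure of $\{e_n\mid n\in\omega\}\cup\{\emptyset,A\}$ under pairwise unions and intersections. Then $(A,W)$ is a Pratt comonoid.
   Context: A Pratt comonoid is a pair $(A,W)$ where $A$ is a set and $W$ is a set of subsets of $A$ such that (i) $\emptyset\in W$ and $A\in W$; (ii) whenever $C\subseteq A\times A$ is such that for every $a\in A$ both the $a$-th row $\{b\mid (a,b)\in C\}$ and the $a$-th column $\{b\mid (b,a)\in C\}$ belong to $W$ (a crossword over $W$), the diagonal $\{b\mid (b,b)\in C\}$ also belongs to $W$. *)

(* Defs.v *)
From mathcomp Require Import all_boot.
From mathcomp Require Import boolp classical_sets.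
Set Implicit Arguments. Unset Strict Implicit. Unset Printing Implicit Defensive.
Local Open Scope classical_set_scope.

(* A Pratt comonoid (A, W): here the carrier set A is the whole type T,
   and W is a set of subsets of T. *)
Definition pratt_comonoid (T : Type) (W : set (set T)) : Prop :=
  W set0 /\ W setT /\
  forall C : set (T * T),
    (forall a : T, W [set b | C (a, b)] /\ W [set b | C (b, a)]) ->
    W [set b | C (b, b)].

Definition e_n (n : nat) : set (set nat) := [set x | x n].

Inductive W_omega : set (set (set nat)) :=
| W_e : forall n, W_omega (e_n n)
| W_empty : W_omega set0
| W_full : W_omega setT
| W_union : forall X Y, W_omega X -> W_omega Y -> W_omega (X `|` Y)
| W_inter : forall X Y, W_omega X -> W_omega Y -> W_omega (X `&` Y).

(* Main.v *)
Require Import Defs.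
From mathcomp Require Import all_boot.
From mathcomp Require Import boolp classical_sets.

Set Implicit Arguments. Unset Strict Implicit. Unset Printing Implicit Defensive.
Local Open Scope classical_set_scope.

Definition agree (n : nat) (y z : set nat) := forall i, (i < n)%N -> (y i <-> z i).
Definition fsupp (X : set (set nat)) :=
  exists N, forall y z, agree N y z -> (X y <-> X z).
Definition upset (X : set (set nat)) :=
  forall x y : set nat, (forall i, x i -> y i) -> X x -> X y.

Lemma agree_le n m y z : (n <= m)%N -> agree m y z -> agree n y z.
Proof. by move=> le H i lt; apply H; apply: leq_trans lt le. Qed.

Lemma W_props X : W_omega X -> upset X /\ fsupp X.
Proof.
elim => [n| | | X1 Y1 _ [uX [N HN]] _ [uY [M HM]] | X1 Y1 _ [uX [N HN]] _ [uY [M HM]]].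
- split; first by move=> x y H; rewrite /e_n /=; apply: H.
  by exists n.+1 => y z H; apply: H; rewrite ltnSn.
- split; first by move=> x y _ [].
  by exists 0 => y z _; split.
- split; first by [].
  by exists 0 => y z _; split.
- split; first by move=> x y H [Hx|Hx]; [left; exact: uX H Hx|right; exact: uY H Hx].
  exists (maxn N M) => y z H.
  have h1 := HN y z (agree_le (leq_maxl N M) H).
  have h2 := HM y z (agree_le (leq_maxr N M) H).
  rewrite /setU /=; tauto.
- split; first by move=> x y H [Hx Hy]; split; [exact: uX H Hx|exact: uY H Hy].
  exists (maxn N M) => y z H.
  have h1 := HN y z (agree_le (leq_maxl N M) H).
  have h2 := HM y z (agree_le (leq_maxr N M) H).
  rewrite /setI /=; tauto.
Qed.

Lemma build N : forall X, upset X -> (forall y z, agree N y z -> (X y <-> X z)) ->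
  W_omega X.
Proof.
elim: N => [|N IH] X uX sX.
- case: (pselect (X set0)) => h.
    have -> : X = setT.
      apply/funext => y; apply/propext; split=> // _.
      by apply/(sX set0 y) => // i; rewrite ltn0.
    exact: W_full.
  have -> : X = set0.
    apply/funext => y; apply/propext; split=> // Xy; apply: h.
    by apply/(sX set0 y) => // i; rewrite ltn0.
  exact: W_empty.
- pose X1 : set (set nat) := fun y => X (fun i => y i \/ i = N).
  pose X0 : set (set nat) := fun y => X (fun i => y i /\ i <> N).
  have -> : X = (e_n N `&` X1) `|` X0.
    apply/funext => y; apply/propext; split.
      move=> Xy; case: (pselect (y N)) => yN.
        left; split => //; apply: uX Xy => i h; by left.
      right; apply: uX Xy => i h; split => // E; apply: yN; by rewrite -E.
    case=> [[yN X1y]|X0y].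
      by apply: uX X1y => i [h|->].
    by apply: uX X0y => i [].
  apply: W_union; [apply: W_inter; [exact: W_e|]|]; apply: IH.
  + by move=> x y H; apply: uX => i [h|h]; [left; apply: H|right].
  + move=> y z H; apply: sX => i; rewrite ltnS leq_eqVlt => /orP [/eqP ->|lt].
      by split; right.
    have := H i lt; tauto.
  + by move=> x y H; apply: uX => i [h1 h2]; split => //; apply: H.
  + move=> y z H; apply: sX => i; rewrite ltnS leq_eqVlt => /orP [/eqP ->|lt].
      by split; case.
    have := H i lt; tauto.
Qed.

Section Compact.
Variable D : set (set nat).
Hypothesis uD : upset D.
Hypothesis oD : forall b, D b -> exists m, D (fun i => (i < m)%N /\ b i).
Hypothesis cD : forall b, ~ D b -> exists m, ~ D (fun i => (i < m)%N -> b i).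

Definition Q (x : set nat) n := exists N, forall y z,
  agree n y x -> agree n z x -> agree N y z -> (D y <-> D z).

Definition upd (x : set nat) n (c : Prop) : set nat :=
  fun i => if i == n then c else x i.

Lemma agree_upd n y x (c : Prop) : agree n y x -> (y n <-> c) ->
  agree n.+1 y (upd x n c).
Proof.
move=> H Hc i; rewrite /upd ltnS leq_eqVlt => /orP [/eqP ->|lt].
  by rewrite eqxx.
by rewrite (ltn_eqF lt); apply: H.
Qed.

Lemma step_lem x n : ~ Q x n -> Q (upd x n True) n.+1 -> ~ Q (upd x n False) n.+1.
Proof.
move=> nQ [N1 H1] [N2 H2]; apply: nQ.
exists (maxn (maxn N1 N2) n.+1) => y z Hy Hz Hyz.
have Hn : y n <-> z n by apply: Hyz; rewrite leq_max ltnSn orbT.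
case: (pselect (y n)) => yn.
  apply: H1; [apply: agree_upd => //; tauto|apply: agree_upd => //; tauto|].
  apply: agree_le Hyz; by rewrite !leq_max leqnn.
apply: H2; [apply: agree_upd => //; tauto|apply: agree_upd => //; tauto|].
apply: agree_le Hyz; by rewrite !leq_max leqnn orbT.
Qed.

Definition stp (x : set nat) n :=
  if pselect (Q (upd x n True) n.+1) then upd x n False else upd x n True.

Fixpoint sq k : set nat := match k with 0 => set0 | k.+1 => stp (sq k) k end.

Lemma stp_other x n i : i != n -> stp x n i = x i.
Proof. by move=> ne; rewrite /stp; destruct pselect; rewrite /upd /= (negbTE ne). Qed.

Lemma sq_stable k i : (i < k)%N -> forall j, sq (k + j) i = sq k i.
Proof.
move=> lt; elim=> [|j IH]; first by rewrite addn0.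
rewrite addnS /= stp_other // neq_ltn; apply/orP; left.
by apply: leq_trans lt (leq_addr _ _).
Qed.

Lemma compact : fsupp D.
Proof.
case: (pselect (Q set0 0)) => [[N HN]|nQ].
  by exists N => y z H; apply: HN => // i; rewrite ltn0.
have inv : forall k, ~ Q (sq k) k.
  elim=> [|k IH] //=; rewrite /stp; destruct pselect as [h|h] => //.
  exact: step_lem.
pose p : set nat := fun i => sq i.+1 i.
have pk : forall k i, (i < k)%N -> sq k i = p i.
  move=> k i lt; rewrite /p -(subnKC lt) sq_stable //.
have ag : forall k y, agree k y (sq k) -> forall i, (i < k)%N -> (y i <-> p i).
  by move=> k y H i lt; rewrite -(pk k i lt); apply: H.
case: (pselect (D p)) => Dp.
  have [m Dm] := oD Dp; exfalso; apply: (inv m); exists 0 => y z Hy Hz _.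
  have A : forall w, agree m w (sq m) -> D w.
    move=> w Hw; apply: uD Dm => i [lt pi]; by apply/(ag m w Hw i lt).
  by split=> _; apply: A.
have [m Dm] := cD Dp; exfalso; apply: (inv m); exists 0 => y z Hy Hz _.
have A : forall w, agree m w (sq m) -> ~ D w.
  move=> w Hw Dw; apply: Dm; apply: uD Dw => i wi lt; by apply/(ag m w Hw i lt).
by split=> h; [case: (A y Hy)|case: (A z Hz)].
Qed.
End Compact.

Theorem theorem5p3 : @pratt_comonoid (set nat) W_omega.
Proof.
split; first exact: W_empty.
split; first exact: W_full.
move=> C HC.
have R : forall a, upset [set b | C (a, b)] /\ fsupp [set b | C (a, b)].
  by move=> a; apply: W_props; case: (HC a).
have K : forall a, upset [set b | C (b, a)] /\ fsupp [set b | C (b, a)].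
  by move=> a; apply: W_props; case: (HC a).
have uD : upset [set b | C (b, b)].
  move=> x y H Cx; have := (K y).1 x y H; apply; exact: ((R x).1 x y H Cx).
have oD : forall b, C (b, b) -> exists m, C ((fun i => (i < m)%N /\ b i), (fun i => (i < m)%N /\ b i)).
  move=> b Cb.
  have [N1 H1] := (R b).2.
  pose b1 : set nat := fun i => (i < N1)%N /\ b i.
  have C1 : C (b, b1).
    apply/(H1 b b1) => // i lt; rewrite /b1; tauto.
  have [N2 H2] := (K b1).2.
  pose b2 : set nat := fun i => (i < N2)%N /\ b i.
  have C2 : C (b2, b1).
    apply/(H2 b2 b) => // i lt; rewrite /b2; tauto.
  exists (maxn N1 N2).
  apply: ((R _).1 b1); first by move=> i [lt bi]; split=> //; rewrite leq_max lt.
  apply: ((K b1).1 b2) C2; by move=> i [lt bi]; split=> //; rewrite leq_max lt orbT.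
have cD : forall b, ~ C (b, b) -> exists m, ~ C ((fun i => (i < m)%N -> b i), (fun i => (i < m)%N -> b i)).
  move=> b Cb.
  have [N1 H1] := (R b).2.
  pose b1 : set nat := fun i => (i < N1)%N -> b i.
  have C1 : ~ C (b, b1).
    move=> h; apply: Cb; apply/(H1 b b1) => // i lt; rewrite /b1; tauto.
  have [N2 H2] := (K b1).2.
  pose b2 : set nat := fun i => (i < N2)%N -> b i.
  have C2 : ~ C (b2, b1).
    move=> h; apply: C1; apply/(H2 b2 b) => // i lt; rewrite /b2; tauto.
  exists (maxn N1 N2) => h; apply: C2.
  have h1 : C (fun i => (i < maxn N1 N2)%N -> b i, b1).
    apply: ((R _).1 _ b1) h; by move=> i hi lt; apply: hi; rewrite leq_max lt.
  apply: ((K b1).1 _ b2) h1; by move=> i hi lt; apply: hi; rewrite leq_max lt orbT.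
have [N HN] := compact uD oD cD.
exact: (@build N _ uD HN).
Qed.
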